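(* Let $G=(V,E)$ be a finite simple graph on $n$ vertices. Let $\mathcal{A}$ be the set of all graphs $G''$ with vertex set $V$ that can be obtained as follows: for each vertex $v\in V$, if $v$ is not isolated, choose two distinct vertices of the closed neighborhood $N(v)\cup\{v\}$ and put the edge between them into $G''$; if $v$ is isolated, put a loop on $v$ into $G''$ (an edge already present is not duplicated). Let $G''_{\min}\in\mathcal{A}$ minimize $n-\alpha(G'')$ over $G''\in\mathcal{A}$. Then $$\gamma(G)=n-\alpha(G''_{\min})=\beta(G''_{\min}).$$
   Context: $N(v)$ denotes the set of neighbors of $v$ in $G$. A set $S\subseteq V$ is a dominating set of $G$ if every vertex of $V$ is in $S$ or has a neighbor in $S$; $\gamma(G)$ is the minimum size of a dominating set. For a graph $H$ possibly with loops, an independent set is a set of vertices containing no two endpoints of an edge and no vertex carrying a loop, and $\alpha(H)$ is the maximum size of an independent set; a vertex cover is a set of vertices meeting every edge (so it contains every vertex carrying a loop), and $\beta(H)$ is the minimum size of a vertex cover. *)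

(* Defs.v *)
From mathcomp Require Import all_boot.
Set Implicit Arguments. Unset Strict Implicit. Unset Printing Implicit Defensive.

Section Defs.
Variable V : finType.

Definition simple_graph (e : rel V) : Prop := symmetric e /\ irreflexive e.

Definition nbhd (e : rel V) (v : V) : {set V} := [set u | e v u].
Definition closed_nbhd (e : rel V) (v : V) : {set V} := v |: nbhd e v.
Definition isolated (e : rel V) (v : V) : bool := nbhd e v == set0.

Definition dominating (e : rel V) (S : {set V}) : bool :=
  [forall v, (v \in S) || [exists u in S, e v u]].

(* gamma(G): minimum size of a dominating set (V itself is dominating). *)
Definition domination_number (e : rel V) : nat :=
  \big[minn/#|V|]_(S : {set V} | dominating e S) #|S|.

(* A graph with loops on V is given by its edge set: each edge is a
   subset of V of size 2 (ordinary edge) or of size 1 (a loop). *)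
Definition independent (E : {set {set V}}) (S : {set V}) : bool :=
  [forall x in E, ~~ (x \subset S)].
Definition vertex_cover (E : {set {set V}}) (C : {set V}) : bool :=
  [forall x in E, [exists v in x, v \in C]].

Definition alpha (E : {set {set V}}) : nat :=
  \max_(S : {set V} | independent E S) #|S|.
Definition beta (E : {set {set V}}) : nat :=
  \big[minn/#|V|]_(C : {set V} | vertex_cover E C) #|C|.

Definition valid_choice (e : rel V) (f : V -> {set V}) : Prop :=
  forall v, if isolated e v then f v = [set v]
            else f v \subset closed_nbhd e v /\ #|f v| = 2.

Definition in_A (e : rel V) (E : {set {set V}}) : Prop :=
  exists f, valid_choice e f /\ E = [set f v | v : V].

End Defs.

(* Main.v *)
Require Import Defs.
From mathcomp Require Import all_boot.

Section Aux.
Variable V : finType.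

Lemma bigmin_le (P : pred {set V}) (d : nat) S :
  P S -> \big[minn/d]_(X | P X) #|X| <= #|S|.
Proof.
rewrite /index_enum.
have : S \in Finite.enum {set V} by rewrite -enumT mem_enum.
elim: (Finite.enum _) => //= y r IH; rewrite big_cons inE.
case/orP => [/eqP<- PS|xr PS]; first by rewrite PS geq_minl.
case: (P y); last exact: IH.
exact: leq_trans (geq_minr _ _) (IH xr PS).
Qed.

Lemma bigmin_att (P : pred {set V}) :
  P setT -> exists2 S, P S & \big[minn/#|V|]_(X | P X) #|X| = #|S|.
Proof.
move=> PT.
have [->|[S [PS ->]]] : \big[minn/#|V|]_(X | P X) #|X| = #|V| \/
        exists S, P S /\ \big[minn/#|V|]_(X | P X) #|X| = #|S|.
- apply: (big_ind (fun m => m = #|V| \/ exists S, P S /\ m = #|S|)).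
  + by left.
  + move=> a b Ha Hb; rewrite /minn; by case: ifP.
  + by move=> S PS; right; exists S.
- by exists setT => //; rewrite cardsT.
- by exists S.
Qed.

Lemma bigmax_att (P : pred {set V}) :
  P set0 -> exists2 S, P S & \max_(X | P X) #|X| = #|S|.
Proof.
move=> P0.
have [->|[S [PS ->]]] : \max_(X | P X) #|X| = 0 \/
        exists S, P S /\ \max_(X | P X) #|X| = #|S|.
- apply: (big_ind (fun m => m = 0 \/ exists S, P S /\ m = #|S|)).
  + by left.
  + move=> a b Ha Hb; rewrite /maxn; by case: ifP.
  + by move=> S PS; right; exists S.
- by exists set0 => //; rewrite cards0.
- by exists S.
Qed.

Lemma alpha_beta (E : {set {set V}}) :
  (forall x, x \in E -> x != set0) -> #|V| - alpha E = beta E.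
Proof.
move=> nE.
have indep0 : independent E set0.
  apply/forall_inP => x xE; rewrite subset0; exact: nE.
have coverT : vertex_cover E setT.
  apply/forall_inP => x xE; have /set0Pn [v vx] := nE x xE.
  by apply/existsP; exists v; rewrite vx in_setT.
have [S iS aS] := bigmax_att (independent E) indep0.
have [C cC bC] := bigmin_att (vertex_cover E) coverT.
rewrite /alpha /beta aS bC; apply/eqP; rewrite eqn_leq; apply/andP; split.
- rewrite -aS leq_subLR -(cardsC C) addnC leq_add2r.
  apply: leq_bigmax_cond.
  apply/forall_inP => x xE; move/forall_inP: cC => /(_ x xE).
  case/existsP => v /andP [vx vC]; apply/subsetPn; exists v => //.
  by rewrite in_setC vC.
- rewrite -bC -(cardsC S) addKn; apply: bigmin_le.
  apply/forall_inP => x xE; move/forall_inP: iS => /(_ x xE).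
  case/subsetPn => v vx vS; apply/existsP; exists v; by rewrite vx in_setC vS.
Qed.

Lemma inA_nonempty (e : rel V) E : in_A e E -> forall x, x \in E -> x != set0.
Proof.
case=> f [vf ->] x /imsetP [v _ ->]; have := vf v; case: ifP.
- by move=> _ ->; apply/set0Pn; exists v; rewrite in_set1.
- by move=> _ [_ c2]; apply/eqP => h; rewrite h cards0 in c2.
Qed.

End Aux.


Theorem theorem2p4 (V : finType) (e : rel V) (Emin : {set {set V}}) :
  simple_graph e ->
  in_A e Emin ->
  (forall E : {set {set V}}, in_A e E -> #|V| - alpha Emin <= #|V| - alpha E) ->
  domination_number e = #|V| - alpha Emin /\
  #|V| - alpha Emin = beta Emin.
Proof.
move=> [_ irr] Amin Hmin.
have ab := fun E (h : in_A e E) => @alpha_beta V E (@inA_nonempty V e E h).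
rewrite (ab _ Amin); split => //.
have le1 : forall E, in_A e E -> domination_number e <= beta E.
  move=> E AE.
  have coverT : vertex_cover E setT.
    apply/forall_inP => x xE; have /set0Pn [v vx] := @inA_nonempty V e E AE x xE.
    by apply/existsP; exists v; rewrite vx in_setT.
  rewrite /beta; have [C cC ->] := @bigmin_att V (vertex_cover E) coverT.
  rewrite /domination_number; apply: (@bigmin_le V (dominating e)); apply/forallP => v.
  case: AE => f [vf EE]; subst E.
  have fvE : f v \in [set f v | v : V] by apply: imset_f.
  move/forall_inP: cC => /(_ (f v) fvE).
  case/existsP => w /andP [wf wC].
  have := vf v; case: ifP => _.
  - by move=> fv; rewrite fv in_set1 in wf; rewrite -(eqP wf) wC.
  - case=> sub _; have := subsetP sub w wf; rewrite /closed_nbhd !inE.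
    case/orP => [/eqP <-|ew]; first by rewrite wC.
    by apply/orP; right; apply/existsP; exists w; rewrite wC.
have domT : dominating e setT by apply/forallP => v; rewrite in_setT.
have [D dD gD] := @bigmin_att V (dominating e) domT.
rewrite -/(domination_number e) in gD.
pose g v := odflt v [pick u | e v u && ((v \in D) || (u \in D))].
pose f v := if isolated e v then [set v] else [set v; g v].
have gP : forall v, ~~ isolated e v -> e v (g v) && ((v \in D) || (g v \in D)).
  move=> v /set0Pn [u]; rewrite inE => evu.
  rewrite /g; case: pickP => [w //|none].
  move/forallP: dD => /(_ v); case/orP => [vD|/existsP [u' /andP [u'D evu']]].
  - by have := none u; rewrite evu vD.
  - by have := none u'; rewrite evu' u'D orbT.
have A0 : in_A e [set f v | v : V].
  exists f; split => // v; rewrite /f; case ni: (isolated e v) => //.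
  have /andP [evg _] := gP v (negbT ni).
  split.
  - apply/subsetP => x; rewrite !inE; case/orP => /eqP -> ; first by rewrite eqxx.
    by rewrite evg orbT.
  - rewrite cards2; case: eqP => // h; by rewrite -h irr in evg.
have le2 : beta [set f v | v : V] <= domination_number e.
  rewrite gD; apply: bigmin_le; apply/forall_inP => x /imsetP [v _ ->].
  rewrite /f; case: ifP => iso.
  - apply/existsP; exists v; rewrite in_set1 eqxx /=.
    move/forallP: dD => /(_ v); case/orP => // /existsP [u /andP [_ evu]].
    have : u \in nbhd e v by rewrite inE.
    by rewrite (eqP iso) inE.
  - have /andP [_ /orP [vD|gD']] := gP v (negbT iso); apply/existsP.
    + by exists v; rewrite !inE eqxx vD.
    + by exists (g v); rewrite !inE eqxx orbT gD'.
have := Hmin _ A0; rewrite (ab _ Amin) (ab _ A0) => h.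
apply/eqP; rewrite eqn_leq (le1 _ Amin) /=.
exact: leq_trans h le2.
Qed.
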